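(* Let $C$ be a maximal cap in $AG(4,3)$ with anchor point $a$. Then $C$ is the union of $10$ $a$-lines, and every point $p \in AG(4,3)\setminus (C\cup\{a\})$ completes exactly three lines with pairs of points of $C$.
   Context: $AG(4,3)$ is the affine space $\mathbb{F}_3^4$; a line is a set of three distinct points $\{x,y,z\}$ with $x+y+z=0$. A cap is a set of points containing no line; a maximal cap is a cap of largest possible size (in $AG(4,3)$ this size is $20$). Every maximal cap $C$ in $AG(4,3)$ has a unique anchor point $a\notin C$ such that $C$ is a union of pairs $\{b,c\}$ with $\{a,b,c\}$ a line. For a point $a$, an $a$-line is a pair of points $\{b,c\}$ such that $\{a,b,c\}$ is a line. For a set $S$ and a point $p\notin S$, $p$ completes a line with a pair of points of $S$ if there are distinct $x,y\in S$ with $\{p,x,y\}$ a line; the number of lines $p$ completes with $S$ is the number of such unordered pairs $\{x,y\}$. *)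

(* Defs.v *)
From HB Require Import structures.
From mathcomp Require Import all_boot all_order all_algebra all_fingroup.
Set Implicit Arguments. Unset Strict Implicit. Unset Printing Implicit Defensive.
Import GRing.Theory.
Local Open Scope ring_scope.

Definition point := 'rV['F_3]_4.

Definition is_line (x y z : point) : bool :=
  [&& x != y, y != z, x != z & x + y + z == 0].

Definition cap (C : {set point}) : bool :=
  [forall x in C, forall y in C, forall z in C, ~~ is_line x y z].

Definition maximal_cap (C : {set point}) : Prop :=
  cap C /\ forall D : {set point}, cap D -> (#|D| <= #|C|)%N.

Definition aline (a : point) (L : {set point}) : bool :=
  [exists b, exists c, (L == [set b; c]) && is_line a b c].

Definition alines_in (a : point) (C : {set point}) : {set {set point}} :=
  [set L | aline a L && (L \subset C)].

Definition anchor (a : point) (C : {set point}) : Prop :=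
  a \notin C /\ C = \bigcup_(L in alines_in a C) L.

Definition completed_pairs (p : point) (S : {set point}) : {set {set point}} :=
  [set P | [exists x in S, exists y in S,
              [&& x != y, P == [set x; y] & is_line p x y]]].

(* Main.v *)
Require Import Defs.
From mathcomp Require Import all_boot all_order all_algebra all_fingroup.
Import GRing.Theory.

Definition reptab : seq (seq nat) := [:: [:: 0; 0; 0; 1]; [:: 0; 0; 1; 0]; [:: 0; 0; 1; 1]; [:: 0; 0; 1; 2]; [:: 0; 1; 0; 0]; [:: 0; 1; 0; 1]; [:: 0; 1; 0; 2]; [:: 0; 1; 1; 0]; [:: 0; 1; 1; 1]; [:: 0; 1; 1; 2]; [:: 0; 1; 2; 0]; [:: 0; 1; 2; 1]; [:: 0; 1; 2; 2]; [:: 1; 0; 0; 0]; [:: 1; 0; 0; 1]; [:: 1; 0; 0; 2]; [:: 1; 0; 1; 0]; [:: 1; 0; 1; 1]; [:: 1; 0; 1; 2]; [:: 1; 0; 2; 0]; [:: 1; 0; 2; 1]; [:: 1; 0; 2; 2]; [:: 1; 1; 0; 0]; [:: 1; 1; 0; 1]; [:: 1; 1; 0; 2]; [:: 1; 1; 1; 0]; [:: 1; 1; 1; 1]; [:: 1; 1; 1; 2]; [:: 1; 1; 2; 0]; [:: 1; 1; 2; 1]; [:: 1; 1; 2; 2]; [:: 1; 2; 0; 0]; [:: 1; 2; 0; 1]; [:: 1; 2; 0; 2]; [:: 1; 2; 1; 0]; [:: 1; 2; 1; 1]; [:: 1; 2; 1; 2]; [:: 1; 2; 2; 0]; [:: 1;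 2; 2; 1]; [:: 1; 2; 2; 2]].
Definition o1tab : seq (seq nat) := [:: [:: 0; 2; 3; 1; 5; 6; 4; 8; 9; 7; 11; 12; 10; 14; 15; 13; 17; 18; 16; 20; 21; 19; 23; 24; 22; 26; 27; 25; 29; 30; 28; 32; 33; 31; 35; 36; 34; 38; 39; 37]; [:: 2; 0; 3; 2; 7; 8; 9; 10; 11; 12; 4; 5; 6; 16; 17; 18; 19; 20; 21; 13; 14; 15; 25; 26; 27; 28; 29; 30; 22; 23; 24; 34; 35; 36; 37; 38; 39; 31; 32; 33]; [:: 3; 3; 0; 1; 8; 9; 7; 11; 12; 10; 5; 6; 4; 17; 18; 16; 20; 21; 19; 14; 15; 13; 26; 27; 25; 29; 30; 28; 23; 24; 22; 35; 36; 34; 38; 39; 37; 32; 33; 31]; [:: 1; 2; 1; 0; 9; 7; 8; 12; 10; 11; 6; 4; 5; 18; 16; 17; 21; 19; 20; 15; 13; 14; 27; 25; 26; 30; 28; 29; 24; 22; 23; 36; 34; 35; 39; 37; 38; 33; 31; 32]; [:: 5; 7; 8; 9; 0; 6; 5; 10; 12; 11; 7; 9; 8; 22; 23; 24; 25; 26; 27; 28; 29; 30; 31; 32; 33; 34; 35; 36; 37; 38; 39; 13; 14; 15; 16; 17; 18; 19; 20; 21]; [:: 6; 8; 9; 7; 6; 0; 4; 12; 11; 10; 9; 8; 7; 23; 24; 22; 26; 27; 25; 29; 30; 28; 32; 33; 31; 35; 36; 34; 38; 39; 37; 14; 15; 13; 17; 18; 16; 20; 21; 19]; [:: 4; 9;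 7; 8; 5; 4; 0; 11; 10; 12; 8; 7; 9; 24; 22; 23; 27; 25; 26; 30; 28; 29; 33; 31; 32; 36; 34; 35; 39; 37; 38; 15; 13; 14; 18; 16; 17; 21; 19; 20]; [:: 8; 10; 11; 12; 10; 12; 11; 0; 9; 8; 4; 6; 5; 25; 26; 27; 28; 29; 30; 22; 23; 24; 34; 35; 36; 37; 38; 39; 31; 32; 33; 16; 17; 18; 19; 20; 21; 13; 14; 15]; [:: 9; 11; 12; 10; 12; 11; 10; 9; 0; 7; 6; 5; 4; 26; 27; 25; 29; 30; 28; 23; 24; 22; 35; 36; 34; 38; 39; 37; 32; 33; 31; 17; 18; 16; 20; 21; 19; 14; 15; 13]; [:: 7; 12; 10; 11; 11; 10; 12; 8; 7; 0; 5; 4; 6; 27; 25; 26; 30; 28; 29; 24; 22; 23; 36; 34; 35; 39; 37; 38; 33; 31; 32; 18; 16; 17; 21; 19; 20; 15; 13; 14]; [:: 11; 4; 5; 6; 7; 9; 8; 4; 6; 5; 0; 12; 11; 28; 29; 30; 22; 23; 24; 25; 26; 27; 37; 38; 39; 31; 32; 33; 34; 35; 36; 19; 20; 21; 13; 14; 15; 16; 17; 18]; [:: 12; 5; 6; 4; 9; 8; 7; 6; 5; 4; 12; 0; 10; 29; 30; 28; 23; 24; 22; 26; 27; 25; 38; 39; 37; 32; 33; 31; 35; 36; 34; 20; 21; 19; 14; 15; 13; 17; 18; 16]; [:: 10; 6; 4; 5; 8; 7; 9; 5; 4; 6; 11; 10; 0; 30; 28; 29; 24; 22; 23; 27; 25;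 26; 39; 37; 38; 33; 31; 32; 36; 34; 35; 21; 19; 20; 15; 13; 14; 18; 16; 17]; [:: 14; 16; 17; 18; 22; 23; 24; 25; 26; 27; 28; 29; 30; 0; 15; 14; 19; 21; 20; 16; 18; 17; 31; 33; 32; 37; 39; 38; 34; 36; 35; 22; 24; 23; 28; 30; 29; 25; 27; 26]; [:: 15; 17; 18; 16; 23; 24; 22; 26; 27; 25; 29; 30; 28; 15; 0; 13; 21; 20; 19; 18; 17; 16; 33; 32; 31; 39; 38; 37; 36; 35; 34; 24; 23; 22; 30; 29; 28; 27; 26; 25]; [:: 13; 18; 16; 17; 24; 22; 23; 27; 25; 26; 30; 28; 29; 14; 13; 0; 20; 19; 21; 17; 16; 18; 32; 31; 33; 38; 37; 39; 35; 34; 36; 23; 22; 24; 29; 28; 30; 26; 25; 27]; [:: 17; 19; 20; 21; 25; 26; 27; 28; 29; 30; 22; 23; 24; 19; 21; 20; 0; 18; 17; 13; 15; 14; 37; 39; 38; 34; 36; 35; 31; 33; 32; 28; 30; 29; 25; 27; 26; 22; 24; 23]; [:: 18; 20; 21; 19; 26; 27; 25; 29; 30; 28; 23; 24; 22; 21; 20; 19; 18; 0; 16; 15; 14; 13; 39; 38; 37; 36; 35; 34; 33; 32; 31; 30; 29; 28; 27; 26; 25; 24; 23; 22]; [:: 16; 21; 19; 20; 27; 25; 26; 30; 28; 29; 24; 22; 23; 20; 19; 21; 17; 16; 0; 14; 13; 15; 38; 37; 39; 35; 34; 36; 32; 31; 33; 29; 28; 30; 26; 25; 27; 23; 22; 24];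 [:: 20; 13; 14; 15; 28; 29; 30; 22; 23; 24; 25; 26; 27; 16; 18; 17; 13; 15; 14; 0; 21; 20; 34; 36; 35; 31; 33; 32; 37; 39; 38; 25; 27; 26; 22; 24; 23; 28; 30; 29]; [:: 21; 14; 15; 13; 29; 30; 28; 23; 24; 22; 26; 27; 25; 18; 17; 16; 15; 14; 13; 21; 0; 19; 36; 35; 34; 33; 32; 31; 39; 38; 37; 27; 26; 25; 24; 23; 22; 30; 29; 28]; [:: 19; 15; 13; 14; 30; 28; 29; 24; 22; 23; 27; 25; 26; 17; 16; 18; 14; 13; 15; 20; 19; 0; 35; 34; 36; 32; 31; 33; 38; 37; 39; 26; 25; 27; 23; 22; 24; 29; 28; 30]; [:: 23; 25; 26; 27; 31; 32; 33; 34; 35; 36; 37; 38; 39; 31; 33; 32; 37; 39; 38; 34; 36; 35; 0; 24; 23; 28; 30; 29; 25; 27; 26; 13; 15; 14; 19; 21; 20; 16; 18; 17]; [:: 24; 26; 27; 25; 32; 33; 31; 35; 36; 34; 38; 39; 37; 33; 32; 31; 39; 38; 37; 36; 35; 34; 24; 0; 22; 30; 29; 28; 27; 26; 25; 15; 14; 13; 21; 20; 19; 18; 17; 16]; [:: 22; 27; 25; 26; 33; 31; 32; 36; 34; 35; 39; 37; 38; 32; 31; 33; 38; 37; 39; 35; 34; 36; 23; 22; 0; 29; 28; 30; 26; 25; 27; 14; 13; 15; 20; 19; 21; 17; 16; 18]; [:: 26; 28; 29; 30; 34; 35; 36; 37; 38; 39; 31; 32; 33; 37; 39; 38; 34; 36;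 35; 31; 33; 32; 28; 30; 29; 0; 27; 26; 22; 24; 23; 19; 21; 20; 16; 18; 17; 13; 15; 14]; [:: 27; 29; 30; 28; 35; 36; 34; 38; 39; 37; 32; 33; 31; 39; 38; 37; 36; 35; 34; 33; 32; 31; 30; 29; 28; 27; 0; 25; 24; 23; 22; 21; 20; 19; 18; 17; 16; 15; 14; 13]; [:: 25; 30; 28; 29; 36; 34; 35; 39; 37; 38; 33; 31; 32; 38; 37; 39; 35; 34; 36; 32; 31; 33; 29; 28; 30; 26; 25; 0; 23; 22; 24; 20; 19; 21; 17; 16; 18; 14; 13; 15]; [:: 29; 22; 23; 24; 37; 38; 39; 31; 32; 33; 34; 35; 36; 34; 36; 35; 31; 33; 32; 37; 39; 38; 25; 27; 26; 22; 24; 23; 0; 30; 29; 16; 18; 17; 13; 15; 14; 19; 21; 20]; [:: 30; 23; 24; 22; 38; 39; 37; 32; 33; 31; 35; 36; 34; 36; 35; 34; 33; 32; 31; 39; 38; 37; 27; 26; 25; 24; 23; 22; 30; 0; 28; 18; 17; 16; 15; 14; 13; 21; 20; 19]; [:: 28; 24; 22; 23; 39; 37; 38; 33; 31; 32; 36; 34; 35; 35; 34; 36; 32; 31; 33; 38; 37; 39; 26; 25; 27; 23; 22; 24; 29; 28; 0; 17; 16; 18; 14; 13; 15; 20; 19; 21]; [:: 32; 34; 35; 36; 13; 14; 15; 16; 17; 18; 19; 20; 21; 22; 24; 23; 28; 30; 29; 25; 27; 26; 13; 15; 14; 19; 21; 20; 16; 18; 17; 0; 33; 32; 37; 39; 38;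 34; 36; 35]; [:: 33; 35; 36; 34; 14; 15; 13; 17; 18; 16; 20; 21; 19; 24; 23; 22; 30; 29; 28; 27; 26; 25; 15; 14; 13; 21; 20; 19; 18; 17; 16; 33; 0; 31; 39; 38; 37; 36; 35; 34]; [:: 31; 36; 34; 35; 15; 13; 14; 18; 16; 17; 21; 19; 20; 23; 22; 24; 29; 28; 30; 26; 25; 27; 14; 13; 15; 20; 19; 21; 17; 16; 18; 32; 31; 0; 38; 37; 39; 35; 34; 36]; [:: 35; 37; 38; 39; 16; 17; 18; 19; 20; 21; 13; 14; 15; 28; 30; 29; 25; 27; 26; 22; 24; 23; 19; 21; 20; 16; 18; 17; 13; 15; 14; 37; 39; 38; 0; 36; 35; 31; 33; 32]; [:: 36; 38; 39; 37; 17; 18; 16; 20; 21; 19; 14; 15; 13; 30; 29; 28; 27; 26; 25; 24; 23; 22; 21; 20; 19; 18; 17; 16; 15; 14; 13; 39; 38; 37; 36; 0; 34; 33; 32; 31]; [:: 34; 39; 37; 38; 18; 16; 17; 21; 19; 20; 15; 13; 14; 29; 28; 30; 26; 25; 27; 23; 22; 24; 20; 19; 21; 17; 16; 18; 14; 13; 15; 38; 37; 39; 35; 34; 0; 32; 31; 33]; [:: 38; 31; 32; 33; 19; 20; 21; 13; 14; 15; 16; 17; 18; 25; 27; 26; 22; 24; 23; 28; 30; 29; 16; 18; 17; 13; 15; 14; 19; 21; 20; 34; 36; 35; 31; 33; 32; 0; 39; 38]; [:: 39; 32; 33; 31; 20; 21; 19; 14; 15; 13; 17; 18; 16; 27; 26;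 25; 24; 23; 22; 30; 29; 28; 18; 17; 16; 15; 14; 13; 21; 20; 19; 36; 35; 34; 33; 32; 31; 39; 0; 37]; [:: 37; 33; 31; 32; 21; 19; 20; 15; 13; 14; 18; 16; 17; 26; 25; 27; 23; 22; 24; 29; 28; 30; 17; 16; 18; 14; 13; 15; 20; 19; 21; 35; 34; 36; 32; 31; 33; 38; 37; 0]].
Definition o2tab : seq (seq nat) := [:: [:: 0; 3; 1; 2; 6; 4; 5; 9; 7; 8; 12; 10; 11; 15; 13; 14; 18; 16; 17; 21; 19; 20; 24; 22; 23; 27; 25; 26; 30; 28; 29; 33; 31; 32; 36; 34; 35; 39; 37; 38]; [:: 3; 0; 0; 0; 10; 11; 12; 4; 5; 6; 7; 8; 9; 19; 20; 21; 13; 14; 15; 16; 17; 18; 28; 29; 30; 22; 23; 24; 25; 26; 27; 37; 38; 39; 31; 32; 33; 34; 35; 36]; [:: 1; 0; 0; 0; 12; 10; 11; 6; 4; 5; 9; 7; 8; 21; 19; 20; 15; 13; 14; 18; 16; 17; 30; 28; 29; 24; 22; 23; 27; 25; 26; 39; 37; 38; 33; 31; 32; 36; 34; 35]; [:: 2; 0; 0; 0; 11; 12; 10; 5; 6; 4; 8; 9; 7; 20; 21; 19; 14; 15; 13; 17; 18; 16; 29; 30; 28; 23; 24; 22; 26; 27; 25; 38; 39; 37; 32; 33; 31; 35; 36; 34]; [:: 6; 10; 12; 11; 0; 0; 0; 1; 2; 3; 1; 3; 2; 31; 32; 33; 34; 35; 36; 37; 38; 39; 13; 14; 15; 16; 17;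 18; 19; 20; 21; 22; 23; 24; 25; 26; 27; 28; 29; 30]; [:: 4; 11; 10; 12; 0; 0; 0; 3; 1; 2; 2; 1; 3; 33; 31; 32; 36; 34; 35; 39; 37; 38; 15; 13; 14; 18; 16; 17; 21; 19; 20; 24; 22; 23; 27; 25; 26; 30; 28; 29]; [:: 5; 12; 11; 10; 0; 0; 0; 2; 3; 1; 3; 2; 1; 32; 33; 31; 35; 36; 34; 38; 39; 37; 14; 15; 13; 17; 18; 16; 20; 21; 19; 23; 24; 22; 26; 27; 25; 29; 30; 28]; [:: 9; 4; 6; 5; 1; 3; 2; 0; 0; 0; 1; 2; 3; 37; 38; 39; 31; 32; 33; 34; 35; 36; 19; 20; 21; 13; 14; 15; 16; 17; 18; 28; 29; 30; 22; 23; 24; 25; 26; 27]; [:: 7; 5; 4; 6; 2; 1; 3; 0; 0; 0; 3; 1; 2; 39; 37; 38; 33; 31; 32; 36; 34; 35; 21; 19; 20; 15; 13; 14; 18; 16; 17; 30; 28; 29; 24; 22; 23; 27; 25; 26]; [:: 8; 6; 5; 4; 3; 2; 1; 0; 0; 0; 2; 3; 1; 38; 39; 37; 32; 33; 31; 35; 36; 34; 20; 21; 19; 14; 15; 13; 17; 18; 16; 29; 30; 28; 23; 24; 22; 26; 27; 25]; [:: 12; 7; 9; 8; 1; 2; 3; 1; 3; 2; 0; 0; 0; 34; 35; 36; 37; 38; 39; 31; 32; 33; 16; 17; 18; 19; 20; 21; 13; 14; 15; 25; 26; 27; 28; 29; 30; 22; 23; 24]; [:: 10; 8; 7; 9; 3;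 1; 2; 2; 1; 3; 0; 0; 0; 36; 34; 35; 39; 37; 38; 33; 31; 32; 18; 16; 17; 21; 19; 20; 15; 13; 14; 27; 25; 26; 30; 28; 29; 24; 22; 23]; [:: 11; 9; 8; 7; 2; 3; 1; 3; 2; 1; 0; 0; 0; 35; 36; 34; 38; 39; 37; 32; 33; 31; 17; 18; 16; 20; 21; 19; 14; 15; 13; 26; 27; 25; 29; 30; 28; 23; 24; 22]; [:: 15; 19; 21; 20; 31; 33; 32; 37; 39; 38; 34; 36; 35; 0; 0; 0; 1; 2; 3; 1; 3; 2; 4; 5; 6; 7; 8; 9; 10; 11; 12; 4; 6; 5; 10; 12; 11; 7; 9; 8]; [:: 13; 20; 19; 21; 32; 31; 33; 38; 37; 39; 35; 34; 36; 0; 0; 0; 3; 1; 2; 2; 1; 3; 6; 4; 5; 9; 7; 8; 12; 10; 11; 5; 4; 6; 11; 10; 12; 8; 7; 9]; [:: 14; 21; 20; 19; 33; 32; 31; 39; 38; 37; 36; 35; 34; 0; 0; 0; 2; 3; 1; 3; 2; 1; 5; 6; 4; 8; 9; 7; 11; 12; 10; 6; 5; 4; 12; 11; 10; 9; 8; 7]; [:: 18; 13; 15; 14; 34; 36; 35; 31; 33; 32; 37; 39; 38; 1; 3; 2; 0; 0; 0; 1; 2; 3; 10; 11; 12; 4; 5; 6; 7; 8; 9; 7; 9; 8; 4; 6; 5; 10; 12; 11]; [:: 16; 14; 13; 15; 35; 34; 36; 32; 31; 33; 38; 37; 39; 2; 1; 3; 0; 0; 0; 3; 1; 2; 12; 10;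 11; 6; 4; 5; 9; 7; 8; 8; 7; 9; 5; 4; 6; 11; 10; 12]; [:: 17; 15; 14; 13; 36; 35; 34; 33; 32; 31; 39; 38; 37; 3; 2; 1; 0; 0; 0; 2; 3; 1; 11; 12; 10; 5; 6; 4; 8; 9; 7; 9; 8; 7; 6; 5; 4; 12; 11; 10]; [:: 21; 16; 18; 17; 37; 39; 38; 34; 36; 35; 31; 33; 32; 1; 2; 3; 1; 3; 2; 0; 0; 0; 7; 8; 9; 10; 11; 12; 4; 5; 6; 10; 12; 11; 7; 9; 8; 4; 6; 5]; [:: 19; 17; 16; 18; 38; 37; 39; 35; 34; 36; 32; 31; 33; 3; 1; 2; 2; 1; 3; 0; 0; 0; 9; 7; 8; 12; 10; 11; 6; 4; 5; 11; 10; 12; 8; 7; 9; 5; 4; 6]; [:: 20; 18; 17; 16; 39; 38; 37; 36; 35; 34; 33; 32; 31; 2; 3; 1; 3; 2; 1; 0; 0; 0; 8; 9; 7; 11; 12; 10; 5; 6; 4; 12; 11; 10; 9; 8; 7; 6; 5; 4]; [:: 24; 28; 30; 29; 13; 15; 14; 19; 21; 20; 16; 18; 17; 4; 6; 5; 10; 12; 11; 7; 9; 8; 0; 0; 0; 1; 2; 3; 1; 3; 2; 4; 5; 6; 7; 8; 9; 10; 11; 12]; [:: 22; 29; 28; 30; 14; 13; 15; 20; 19; 21; 17; 16; 18; 5; 4; 6; 11; 10; 12; 8; 7; 9; 0; 0; 0; 3; 1; 2; 2; 1; 3; 6; 4; 5; 9; 7; 8; 12; 10; 11]; [:: 23; 30;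 29; 28; 15; 14; 13; 21; 20; 19; 18; 17; 16; 6; 5; 4; 12; 11; 10; 9; 8; 7; 0; 0; 0; 2; 3; 1; 3; 2; 1; 5; 6; 4; 8; 9; 7; 11; 12; 10]; [:: 27; 22; 24; 23; 16; 18; 17; 13; 15; 14; 19; 21; 20; 7; 9; 8; 4; 6; 5; 10; 12; 11; 1; 3; 2; 0; 0; 0; 1; 2; 3; 10; 11; 12; 4; 5; 6; 7; 8; 9]; [:: 25; 23; 22; 24; 17; 16; 18; 14; 13; 15; 20; 19; 21; 8; 7; 9; 5; 4; 6; 11; 10; 12; 2; 1; 3; 0; 0; 0; 3; 1; 2; 12; 10; 11; 6; 4; 5; 9; 7; 8]; [:: 26; 24; 23; 22; 18; 17; 16; 15; 14; 13; 21; 20; 19; 9; 8; 7; 6; 5; 4; 12; 11; 10; 3; 2; 1; 0; 0; 0; 2; 3; 1; 11; 12; 10; 5; 6; 4; 8; 9; 7]; [:: 30; 25; 27; 26; 19; 21; 20; 16; 18; 17; 13; 15; 14; 10; 12; 11; 7; 9; 8; 4; 6; 5; 1; 2; 3; 1; 3; 2; 0; 0; 0; 7; 8; 9; 10; 11; 12; 4; 5; 6]; [:: 28; 26; 25; 27; 20; 19; 21; 17; 16; 18; 14; 13; 15; 11; 10; 12; 8; 7; 9; 5; 4; 6; 3; 1; 2; 2; 1; 3; 0; 0; 0; 9; 7; 8; 12; 10; 11; 6; 4; 5]; [:: 29; 27; 26; 25; 21; 20; 19; 18; 17; 16; 15; 14; 13; 12; 11; 10; 9; 8; 7; 6; 5;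 4; 2; 3; 1; 3; 2; 1; 0; 0; 0; 8; 9; 7; 11; 12; 10; 5; 6; 4]; [:: 33; 37; 39; 38; 22; 24; 23; 28; 30; 29; 25; 27; 26; 4; 5; 6; 7; 8; 9; 10; 11; 12; 4; 6; 5; 10; 12; 11; 7; 9; 8; 0; 0; 0; 1; 2; 3; 1; 3; 2]; [:: 31; 38; 37; 39; 23; 22; 24; 29; 28; 30; 26; 25; 27; 6; 4; 5; 9; 7; 8; 12; 10; 11; 5; 4; 6; 11; 10; 12; 8; 7; 9; 0; 0; 0; 3; 1; 2; 2; 1; 3]; [:: 32; 39; 38; 37; 24; 23; 22; 30; 29; 28; 27; 26; 25; 5; 6; 4; 8; 9; 7; 11; 12; 10; 6; 5; 4; 12; 11; 10; 9; 8; 7; 0; 0; 0; 2; 3; 1; 3; 2; 1]; [:: 36; 31; 33; 32; 25; 27; 26; 22; 24; 23; 28; 30; 29; 10; 11; 12; 4; 5; 6; 7; 8; 9; 7; 9; 8; 4; 6; 5; 10; 12; 11; 1; 3; 2; 0; 0; 0; 1; 2; 3]; [:: 34; 32; 31; 33; 26; 25; 27; 23; 22; 24; 29; 28; 30; 12; 10; 11; 6; 4; 5; 9; 7; 8; 8; 7; 9; 5; 4; 6; 11; 10; 12; 2; 1; 3; 0; 0; 0; 3; 1; 2]; [:: 35; 33; 32; 31; 27; 26; 25; 24; 23; 22; 30; 29; 28; 11; 12; 10; 5; 6; 4; 8; 9; 7; 9; 8; 7; 6; 5; 4; 12; 11; 10; 3; 2; 1; 0; 0; 0; 2; 3; 1];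 [:: 39; 34; 36; 35; 28; 30; 29; 25; 27; 26; 22; 24; 23; 7; 8; 9; 10; 11; 12; 4; 5; 6; 10; 12; 11; 7; 9; 8; 4; 6; 5; 1; 2; 3; 1; 3; 2; 0; 0; 0]; [:: 37; 35; 34; 36; 29; 28; 30; 26; 25; 27; 23; 22; 24; 9; 7; 8; 12; 10; 11; 6; 4; 5; 11; 10; 12; 8; 7; 9; 5; 4; 6; 3; 1; 2; 2; 1; 3; 0; 0; 0]; [:: 38; 36; 35; 34; 30; 29; 28; 27; 26; 25; 24; 23; 22; 8; 9; 7; 11; 12; 10; 5; 6; 4; 12; 11; 10; 9; 8; 7; 6; 5; 4; 2; 3; 1; 3; 2; 1; 0; 0; 0]].
Definition L0 : seq nat := [:: 0; 1; 4; 8; 13; 17; 24; 28; 36; 38].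

Definition o1 c x := nth 0 (nth [::] o1tab c) x.
Definition o2 c x := nth 0 (nth [::] o2tab c) x.
Definition I40 := iota 0 40.
Definition okS (S : nat -> bool) := forall i j, i != j -> S i -> S j -> ~~ S (o1 i j) && ~~ S (o2 i j).
Definition PS (S : nat -> bool) := count S I40 = 10 /\
  forall r, r < 40 -> ~~ S r -> \sum_(c <- I40 | S c) (S (o1 r c) + S (o2 r c)) = 6.
Definition NSrow i x := if x == i then nseq (39 - i) true
  else [seq (k != o1 i x) && (k != o2 i x) | k <- iota i.+1 (39 - i)].
Definition NST := [seq [seq NSrow i x | x <- I40] | i <- I40].
Fixpoint andl (a b : seq bool) := match a, b with x::a', y::b' => (x && y) :: andl a' b' | _, _ => [::] end.
Definition leafb (ch : seq nat) : bool := (size ch < 10) || [&& size ch == 10, uniq ch, all (fun c => c < 40) ch &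
  all (fun r => (r \in ch) || (sumn [seq (o1 r c \in ch) + (o2 r c \in ch) | c <- ch] == 6)) I40].
Fixpoint go (T : seq (seq (seq bool))) (n i : nat) (ch : seq nat) (av : seq bool) : bool :=
  match n with 0 => if av is [::] then leafb ch else false
  | n'.+1 => match av with [::] => leafb ch
    | b :: rest => if size ch + count id av < 10 then true else
        (if b then let row := nth [::] T i in go T n' i.+1 (i :: ch)
             (foldr (fun x acc => andl acc (nth [::] row x)) rest ch)
         else true) && go T n' i.+1 ch rest end end.

Lemma nth_andl a b t : nth false (andl a b) t = nth false a t && nth false b t.
Proof.
elim: a b t => [|x a IH] [|y b] [|t] //=; by rewrite ?nth_nil ?andbF.
Qed.
Lemma size_andl a b : size (andl a b) = minn (size a) (size b).
Proof. elim: a b => [|x a IH] [|y b] //=; by rewrite IH minnSS. Qed.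

Lemma count_le_av (S : nat -> bool) i av : (forall t, t < size av -> S (i + t) -> nth false av t) ->
  count S (iota i (size av)) <= count id av.
Proof.
elim: av i => [|b av IH] i H //=.
apply: leq_add.
  case Si: (S i) => //. by have := H 0 isT; rewrite addn0 Si => /(_ isT) /= ->.
apply: IH => t Ht St; apply: (H t.+1) => //. by rewrite addnS -addSn.
Qed.

Lemma sum_mem (ch : seq nat) (g : nat -> nat) : uniq ch -> all (fun c => c < 40) ch ->
  \sum_(c <- I40 | c \in ch) g c = sumn [seq g c | c <- ch].
Proof.
move=> Uch Ach; rewrite -big_filter.
have -> : sumn [seq g c | c <- ch] = \sum_(c <- ch) g c.
  by elim: ch {Uch Ach} => [|c ch IH]; rewrite ?big_nil ?big_cons //= IH.
apply: perm_big; apply: uniq_perm => //; first by rewrite filter_uniq // iota_uniq.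
move=> x; rewrite mem_filter mem_iota /=; case xin: (x \in ch) => //=.
by have := allP Ach x xin.
Qed.

Lemma count_mem_ch (ch : seq nat) : uniq ch -> all (fun c => c < 40) ch -> count (mem ch) I40 = size ch.
Proof.
move=> Uch Ach; rewrite -size_filter; apply: perm_size; apply: uniq_perm => //.
  by rewrite filter_uniq // iota_uniq.
move=> x; rewrite mem_filter mem_iota /=; case xin: (x \in ch) => //=.
by have := allP Ach x xin.
Qed.

Lemma leaf_sound ch (S : nat -> bool) : leafb ch -> (forall x, S x = (x \in ch)) -> 10 <= count S I40 -> PS S.
Proof.
move=> L HS Hc.
have eS : S =1 mem ch by [].
rewrite (eq_count eS) in Hc.
case/orP: L => [Hs|].
  exfalso.
  have: count (mem ch) I40 <= size ch.
    rewrite -size_filter; apply: uniq_leq_size; first by rewrite filter_uniq // iota_uniq.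
    by move=> x; rewrite mem_filter => /andP[].
  move=> H; have := leq_trans Hc H; by rewrite leqNgt Hs.
case/and4P => /eqP Hsz U A Hall.
split; first by rewrite (eq_count eS) count_mem_ch.
move=> r r40 Sr.
have rch : r \notin ch by rewrite -HS.
have := allP Hall r; rewrite mem_iota /= r40 => /(_ isT); rewrite (negbTE rch) /= => /eqP H6.
rewrite -H6 -(@sum_mem ch (fun c => (o1 r c \in ch) + (o2 r c \in ch)) U A).
by apply: eq_big => c; rewrite ?HS.
Qed.

Lemma size_NSrow i x : size (NSrow i x) = 39 - i.
Proof. by rewrite /NSrow; case: (x == i); rewrite ?size_nseq ?size_map ?size_iota. Qed.

Lemma NST_row i x : i < 40 -> x < 40 -> nth [::] (nth [::] NST i) x = NSrow i x.
Proof.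
move=> Hi Hx; rewrite /NST (nth_map 0) ?size_iota // (nth_map 0) ?size_iota //.
by rewrite !nth_iota.
Qed.

Lemma nth_NSrow i x t : t < 39 - i -> x != i ->
  nth false (NSrow i x) t = (i.+1 + t != o1 i x) && (i.+1 + t != o2 i x).
Proof.
move=> Ht Hx; rewrite /NSrow (negbTE Hx) (nth_map 0) ?size_iota // nth_iota //.
Qed.

Section Fold.
Variable (i : nat) (row : seq (seq bool)).
Definition fstep := fun x acc => andl acc (nth [::] row x).
Lemma nth_fold rest ch t : nth false (foldr fstep rest ch) t =
  nth false rest t && all (fun x => nth false (nth [::] row x) t) ch.
Proof.
elim: ch => [|x ch IH] /=; first by rewrite andbT.
by rewrite /fstep nth_andl IH; case: (nth false rest t); case: (nth false (nth [::] row x) t); rewrite /= ?andbT ?andbF.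
Qed.
Lemma size_fold rest ch : (forall x, x \in ch -> size rest <= size (nth [::] row x)) ->
  size (foldr fstep rest ch) = size rest.
Proof.
elim: ch => [|x ch IH] H //=.
rewrite /fstep size_andl IH; last by move=> y yin; apply: H; rewrite inE yin orbT.
by apply/minn_idPl; apply: H; rewrite inE eqxx.
Qed.
End Fold.

Lemma go_sound n : forall i ch av, size av <= n -> i + size av = 40 -> go NST n i ch av ->
 forall S : nat -> bool, (forall x, S x -> x < 40) -> okS S -> (forall x, x \in ch -> S x) ->
 (forall x, x < i -> S x -> x \in ch) -> (forall t, t < size av -> S (i + t) -> nth false av t) ->
 10 <= count S I40 -> PS S.
Proof.
have leaf: forall i ch (S : nat -> bool), i = 40 -> leafb ch -> (forall x, S x -> x < 40) ->
  (forall x, x \in ch -> S x) -> (forall x, x < i -> S x -> x \in ch) -> 10 <= count S I40 -> PS S.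
  move=> i ch S -> L H1 H2 H3 Hc; apply: (@leaf_sound ch S L) => // x.
  by apply/idP/idP => [Sx|/H2//]; apply: H3 => //; apply: H1.
elim: n => [|n IH] i ch av.
  case: av => [|//] _ /=; rewrite addn0 => Hi L S H1 _ H2 H3 _; exact: (leaf i ch S Hi L H1 H2 H3).
case: av => [|b rest] /=.
  by move=> _; rewrite addn0 => Hi L S H1 _ H2 H3 _; exact: (leaf i ch S Hi L H1 H2 H3).
move=> Hsz Hi G S S40 okS_ chS belowS avS Hc.
have Hcnt : count S I40 <= size ch + (b + count id rest).
  rewrite /I40 -Hi iotaD count_cat add0n; apply: leq_add.
    rewrite -size_filter; apply: uniq_leq_size; first by rewrite filter_uniq // iota_uniq.
    move=> x; rewrite mem_filter mem_iota add0n /= => /andP[Sx xi]; exact: belowS.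
  exact: (@count_le_av S i (b :: rest) avS).
move: G; case: ifP => [Hp|_].
  by move: (leq_trans Hc Hcnt); rewrite leqNgt Hp.
have Hrest : size rest = 39 - i by move: Hi; rewrite addnS => /eqP; rewrite eqSS => /eqP <-; rewrite addKn.
case Si: (S i).
  have -> : b by have := avS 0 isT; rewrite addn0 Si => /(_ isT).
  move=> /andP[G _].
  have ch40 : forall x, x \in ch -> x < 40 by move=> x /chS /S40.
  have i40 : i < 40 by apply: S40.
  have Hsf : size (foldr (fstep (nth [::] NST i)) rest ch) = size rest.
    rewrite size_fold // => x xin; rewrite NST_row ?size_NSrow ?Hrest //; exact: ch40.
  apply: (IH _ _ _ _ _ G S) => //.
  - by rewrite [size _]Hsf.
  - by rewrite [size _]Hsf addSn -addnS.
  - by move=> x; rewrite inE => /orP[/eqP->|/chS].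
  - move=> x; rewrite ltnS leq_eqVlt => /orP[/eqP->|xi Sx]; first by rewrite inE eqxx.
    by rewrite inE (belowS x xi Sx) orbT.
  - move=> t Ht St.
    have Ht' : t < size rest by move: Ht; rewrite [size _]Hsf.
    rewrite nth_fold; apply/andP; split.
      by have := avS t.+1 Ht'; rewrite addnS -addSn => /(_ St).
    apply/allP => x xin; rewrite NST_row //; last exact: ch40.
    case: (eqVneq x i) => [->|xi].
      by rewrite /NSrow eqxx nth_nseq -Hrest Ht'.
    rewrite nth_NSrow -?Hrest //.
    have ix : i != x by rewrite eq_sym.
    have /andP[n1 n2] := okS_ i x ix Si (chS x xin).
    by apply/andP; split; apply/eqP => E; [move: n1|move: n2]; rewrite -E St.
move=> /andP[_ G].
apply: (IH _ _ _ _ _ G S) => //.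
- by rewrite addSn -addnS.
- move=> x; rewrite ltnS leq_eqVlt => /orP[/eqP->|xi Sx]; first by rewrite Si.
  exact: belowS.
- move=> t Ht St; have := avS t.+1; rewrite /= addnS -addSn; apply => //.
Qed.

Lemma search_run : (fun T => go T 40 0 [::] (nseq 40 true)) NST = true.
Proof. vm_cast_no_check (erefl true). Qed.

Lemma search (S : nat -> bool) : (forall x, S x -> x < 40) -> okS S -> 10 <= count S I40 -> PS S.
Proof.
move=> H1 H2 H3.
apply: (@go_sound 40 0 [::] (nseq 40 true) _ _ search_run S H1 H2) => // t.
by rewrite size_nseq => Ht _; rewrite nth_nseq Ht.
Qed.

Local Open Scope ring_scope.

Definition I4 := iota 0 4.
Definition rv (i : nat) (k : nat) : 'F_3 := (nth 0%N (nth [::] reptab i) k)%:R.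
Definition rep (i : nat) : point := \row_(k < 4) rv i k.
Definition sg (b : bool) (v : point) := if b then v else - v.

Definition F1b := all (fun i => has (fun k => rv i k != 0) I4) I40.
Definition F2b := all (fun i => all (fun j => (i == j) || has (fun k => rv i k != rv j k) I4 && has (fun k => rv i k != - rv j k) I4) I40) I40.
Definition F4b := all (fun i => all (fun j => (i == j) || [&& (o1 i j < 40)%N, (o2 i j < 40)%N,
   all (fun k => rv i k + rv j k == rv (o1 i j) k) I4 || all (fun k => rv i k + rv j k == - rv (o1 i j) k) I4 &
   all (fun k => rv i k - rv j k == rv (o2 i j) k) I4 || all (fun k => rv i k - rv j k == - rv (o2 i j) k) I4]) I40) I40.
Definition I3 := iota 0 3.
Definition ev (d0 d1 d2 d3 k : nat) : 'F_3 := (nth 0%N [:: d0; d1; d2; d3] k)%:R.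
Definition F3b := all (fun d0 => all (fun d1 => all (fun d2 => all (fun d3 =>
  all (fun k => ev d0 d1 d2 d3 k == 0) I4 || has (fun i => all (fun k => ev d0 d1 d2 d3 k == rv i k) I4 || all (fun k => ev d0 d1 d2 d3 k == - rv i k) I4) I40)
  I3) I3) I3) I3.
Definition F5b := all (fun d => let e := d%:R : 'F_3 in e + e + e == 0) I3.
Lemma F1 : F1b. Proof. vm_cast_no_check (erefl true). Qed.
Lemma F2 : F2b. Proof. vm_cast_no_check (erefl true). Qed.
Lemma F3 : F3b. Proof. vm_cast_no_check (erefl true). Qed.
Lemma F4 : F4b. Proof. vm_cast_no_check (erefl true). Qed.
Lemma F5 : F5b. Proof. vm_cast_no_check (erefl true). Qed.

Lemma rowP4 (x y : point) : (forall k : 'I_4, x 0 k = y 0 k) -> x = y.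
Proof. by move=> H; apply/matrixP => i k; rewrite (ord1 i). Qed.

Lemma Fval (e : 'F_3) : e = (val e)%:R /\ (val e \in I3).
Proof. by rewrite natr_Zp mem_iota /=; split => //; exact: ltn_ord. Qed.

Lemma three (x : point) : x + x + x = 0.
Proof.
apply: rowP4 => k; rewrite !mxE.
have [E H] := Fval (x 0 k); rewrite E; move: (val (x 0 k)) H => d Hd.
by have := allP F5 d Hd => /eqP.
Qed.

Lemma neg2 (x : point) : - (x + x) = x.
Proof. by apply/eqP; rewrite eq_sym -subr_eq0 opprK addrA three. Qed.

Lemma xneg (x : point) : x = - x -> x = 0.
Proof.
move=> H; have h2 : x + x = 0 by rewrite {2}H subrr.
by have := three x; rewrite h2 add0r.
Qed.

Lemma allI4 {P : nat -> bool} (k : 'I_4) : all P I4 -> P k.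
Proof. by move/allP; apply; rewrite mem_iota /= ltn_ord. Qed.

Lemma rep_neq0 i : (i < 40)%N -> rep i != 0.
Proof.
move=> Hi; have /hasP [k] : has (fun k => rv i k != 0) I4 by apply: (allP F1); rewrite /I40 mem_iota.
rewrite /I4 mem_iota leq0n add0n => Hk Hne; apply/eqP => E.
have := congr1 (fun m : point => m 0 (Ordinal Hk)) E; rewrite !mxE /= => E'.
by rewrite E' eqxx in Hne.
Qed.

Lemma rep_neqN i : (i < 40)%N -> rep i != - rep i.
Proof. by move=> Hi; apply/eqP => /xneg /eqP; rewrite (negbTE (@rep_neq0 i Hi)). Qed.

Lemma rep_inj i j : (i < 40)%N -> (j < 40)%N -> i != j -> rep i != rep j /\ rep i != - rep j.
Proof.
move=> Hi Hj Hij.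
have /allP /(_ j) : all (fun j => (i == j) || has (fun k => rv i k != rv j k) I4 && has (fun k => rv i k != - rv j k) I4) I40.
  by apply: (allP F2); rewrite /I40 mem_iota.
rewrite /I40 mem_iota leq0n add0n Hj (negbTE Hij) orFb => /(_ isT) /andP [/hasP [k Hk N1] /hasP [k' Hk' N2]].
move: Hk Hk'; rewrite /I4 !mem_iota /= => Hk Hk'.
split; apply/eqP => E.
  have := congr1 (fun m : point => m 0 (Ordinal Hk)) E; rewrite !mxE /= => E'.
  by rewrite E' eqxx in N1.
have := congr1 (fun m : point => m 0 (Ordinal Hk')) E; rewrite !mxE /= => E'.
by rewrite E' eqxx in N2.
Qed.

Lemma rep_surj (u : point) : u != 0 -> exists2 i, (i < 40)%N & (u = rep i \/ u = - rep i).
Proof.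
move=> u0.
set o0 : 'I_4 := @Ordinal 4 0 isT. set o1' : 'I_4 := @Ordinal 4 1 isT.
set o2' : 'I_4 := @Ordinal 4 2 isT. set o3 : 'I_4 := @Ordinal 4 3 isT.
have H0 := (Fval (u 0 o0)).2. have H1 := (Fval (u 0 o1')).2.
have H2 := (Fval (u 0 o2')).2. have H3 := (Fval (u 0 o3)).2.
have := allP F3 _ H0 => /allP /(_ _ H1) /allP /(_ _ H2) /allP /(_ _ H3).
have eE : forall k : 'I_4, ev (val (u 0 o0)) (val (u 0 o1')) (val (u 0 o2')) (val (u 0 o3)) k = u 0 k.
  case=> [[|[|[|[|//]]]] Hk]; rewrite /ev /= natr_Zp; congr (u 0 _); exact: val_inj.
case/orP => [H|/hasP [i Hi H]].
  by case/eqP: u0; apply: rowP4 => k; rewrite -eE mxE; apply/eqP; exact: (allI4 k H).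
exists i; first by move: Hi; rewrite /I40 mem_iota.
case/orP: H => H; [left|right]; apply: rowP4 => k; rewrite -eE !mxE; apply/eqP; exact: (allI4 k H).
Qed.

Lemma rep_add i j : (i < 40)%N -> (j < 40)%N -> i != j ->
  [/\ (o1 i j < 40)%N, (o2 i j < 40)%N, exists e, rep i + rep j = sg e (rep (o1 i j))
    & exists e, rep i - rep j = sg e (rep (o2 i j))].
Proof.
move=> Hi Hj Hij.
have /allP /(_ j) : all (fun j => (i == j) || [&& (o1 i j < 40)%N, (o2 i j < 40)%N,
   all (fun k => rv i k + rv j k == rv (o1 i j) k) I4 || all (fun k => rv i k + rv j k == - rv (o1 i j) k) I4 &
   all (fun k => rv i k - rv j k == rv (o2 i j) k) I4 || all (fun k => rv i k - rv j k == - rv (o2 i j) k) I4]) I40.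
  by apply: (allP F4); rewrite /I40 mem_iota.
rewrite /I40 mem_iota leq0n add0n Hj (negbTE Hij) orFb => /(_ isT) /and4P [h1 h2 h3 h4].
split => //.
  case/orP: h3 => H; [exists true|exists false]; apply: rowP4 => k; rewrite !mxE; apply/eqP; exact: (allI4 k H).
case/orP: h4 => H; [exists true|exists false]; apply: rowP4 => k; rewrite !mxE; apply/eqP; exact: (allI4 k H).
Qed.

Lemma solve3 {x y z : point} : x + y + z = 0 -> z = - (x + y).
Proof. by move/eqP; rewrite addrC addr_eq0 => /eqP. Qed.

Lemma sgN e (v : point) : - sg e v = sg (~~ e) v.
Proof. by case: e; rewrite /= ?opprK. Qed.

Lemma negsum (a X Y : point) : - ((a + X) + (a + Y)) = a - (X + Y).
Proof. by rewrite addrACA opprD neg2. Qed.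

Lemma addrI0 (a v : point) : a + v = a -> v = 0.
Proof. by move=> E; rewrite -(addKr a v) E addNr. Qed.

Lemma line3 (x y : point) : x != y -> is_line x y (- (x + y)).
Proof.
move=> xy; rewrite /is_line xy /= subrr eqxx andbT.
apply/andP; split; apply/eqP => E.
  have : y + x + y = 0 by rewrite [y + x]addrC {2}E subrr.
  rewrite addrC addrA => /solve3; rewrite neg2 => yx; by rewrite yx eqxx in xy.
have : x + x + y = 0 by rewrite {2}E opprD addrA subrr add0r addNr.
by move/solve3; rewrite neg2 => yx; rewrite yx eqxx in xy.
Qed.

Lemma capN {C : {set point}} {x y} : cap C -> x \in C -> y \in C -> x != y -> - (x + y) \notin C.
Proof.
move=> /forall_inP /(_ x) H xC yC xy; apply/negP => zC.
by have := H xC => /forall_inP /(_ y yC) /forall_inP /(_ _ zC); rewrite line3.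
Qed.

Lemma cardA (P : nat -> bool) : #|[set i : 'I_40 | P i]| = count P I40.
Proof.
rewrite -sum1dep_card -sum1_count /I40.
by rewrite -(big_mkord (fun i => P i) (fun _ => 1%N)) /index_iota subn0.
Qed.

Lemma sgadd s b (R I : point) : sg s R + sg b I = sg s (R + sg (s == b) I).
Proof. by case: s; case: b; rewrite /= ?opprD ?opprK. Qed.

Lemma sgsg e f (v : point) : sg e (sg f v) = sg (e == f) v.
Proof. by case: e; case: f; rewrite /= ?opprK. Qed.

Lemma comb {i j} (s t : bool) : (i < 40)%N -> (j < 40)%N -> i != j ->
  exists e, sg s (rep i) + sg t (rep j) = sg e (rep (if s == t then o1 i j else o2 i j)).
Proof.
move=> Hi Hj ij; have [_ _ [e1 E1] [e2 E2]] := @rep_add i j Hi Hj ij.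
rewrite sgadd; case: (s == t) => /=.
  by exists (s == e1); rewrite E1 sgsg.
by exists (s == e2); rewrite E2 sgsg.
Qed.

Lemma o_lt {i j} (s t : bool) : (i < 40)%N -> (j < 40)%N -> i != j -> ((if s == t then o1 i j else o2 i j) < 40)%N.
Proof. move=> Hi Hj ij; have [h1 h2 _ _] := @rep_add i j Hi Hj ij; by case: ifP. Qed.

Lemma sg_inj {u e k o} : (k < 40)%N -> (o < 40)%N -> sg u (rep k) = sg e (rep o) -> k = o.
Proof.
move=> Hk Ho E; apply/eqP; apply/negP => /negP ko.
have [n1 n2] := @rep_inj k o Hk Ho ko.
move: E; case: u; case: e => /= E.
- by rewrite E eqxx in n1.
- by rewrite E eqxx in n2.
- by move: n2; rewrite -E opprK eqxx.
- by move: n1; rewrite -[rep k]opprK E opprK eqxx.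
Qed.

Lemma sg_neq0 e {i} : (i < 40)%N -> sg e (rep i) != 0.
Proof. by move=> Hi; case: e; rewrite /= ?oppr_eq0 rep_neq0. Qed.

Definition okL0b := all (fun i => all (fun j => (i == j) || ~~ (i \in L0) || ~~ (j \in L0) ||
  ((o1 i j \notin L0) && (o2 i j \notin L0))) I40) I40.
Lemma okL0 : okL0b. Proof. by vm_compute. Qed.
Definition g0 (q : 'I_40 * bool) : point := sg q.2 (rep q.1).
Definition A0 := [set i : 'I_40 | val i \in L0].
Definition D0 := g0 @: setX A0 [set: bool].

Lemma g0_inj : injective g0.
Proof.
move=> [i b] [j c]; rewrite /g0 /= => E.
have ij := sg_inj (ltn_ord i) (ltn_ord j) E.
have eij : i = j by apply: val_inj.
subst j; congr (_, _); move: E; case: b; case: c => //= E.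
  by move: (@rep_neqN i (ltn_ord i)); rewrite {1}E eqxx.
by move: (@rep_neqN i (ltn_ord i)); rewrite -{1}E eqxx.
Qed.

Lemma D0card : #|D0| = 20%N.
Proof.
rewrite card_imset; last exact: g0_inj.
by rewrite cardsX cardsT card_bool /A0 cardA.
Qed.

Lemma D0cap : cap D0.
Proof.
apply/forall_inP => x /imsetP [[i s] /setXP [iA _] ->].
apply/forall_inP => y /imsetP [[j t] /setXP [jA _] ->].
apply/forall_inP => z /imsetP [[k u] /setXP [kA _] ->].
move: iA jA kA; rewrite !in_set /g0 /= => iA jA kA; apply/negP => /and4P [xy _ _ /eqP E].
have zE := solve3 E.
case: (eqVneq i j) => [ij|ij].
  subst j; move: xy zE; clear E; case: s; case: t; rewrite /= ?eqxx // => _;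
  rewrite ?subrr ?addNr ?oppr0 => zE; by move: (sg_neq0 u (ltn_ord k)); rewrite zE eqxx.
have ij' : (val i != val j) by [].
have [e Ee] := comb s t (ltn_ord i) (ltn_ord j) ij'.
move: zE; rewrite Ee sgN => /(sg_inj (ltn_ord k) (o_lt s t (ltn_ord i) (ltn_ord j) ij')) ko.
have := allP okL0 i; rewrite /I40 mem_iota ltn_ord => /(_ isT) /allP /(_ j).
rewrite mem_iota ltn_ord => /(_ isT); rewrite (negbTE ij') iA jA /=.
by move: kA; rewrite ko; case: (s == t) => ->; rewrite ?andbF.
Qed.
Section Main.
Variables (C : {set point}) (a : point).
Hypothesis capC : cap C.
Hypothesis aC : a \notin C.
Hypothesis Cun : C = \bigcup_(L in alines_in a C) L.

Lemma symC u : a + u \in C -> a - u \in C.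
Proof.
move=> H; have : a + u \in \bigcup_(L in alines_in a C) L by rewrite -Cun.
case/bigcupP => L; rewrite inE => /andP [/existsP [b /existsP [c /andP [/eqP LE Hl]]] LC] Hx.
case/and4P: Hl => _ _ _ /eqP E.
move: Hx; rewrite LE !inE => /orP [/eqP Hb|/eqP Hc].
  have := solve3 E; rewrite -Hb addrA opprD neg2 => Ec.
  by apply: (subsetP LC); rewrite LE !inE -Ec eqxx orbT.
have E' : a + c + b = 0 by rewrite -addrA [c + b]addrC addrA.
have := solve3 E'; rewrite -Hc addrA opprD neg2 => Eb.
by apply: (subsetP LC); rewrite LE !inE -Eb eqxx.
Qed.

Definition Sc i := a + rep i \in C.

Lemma memC i e : (a + sg e (rep i) \in C) = Sc i.
Proof.
case: e => //=; rewrite /Sc; apply/idP/idP => H; first by rewrite -[rep i]opprK; apply: symC.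
exact: symC.
Qed.

Lemma rep_big i : (40 <= i)%N -> rep i = 0.
Proof.
move=> Hi; apply: rowP4 => k; rewrite !mxE /rv (@nth_default _ [::] reptab i) ?nth_nil //.
Qed.

Lemma S40 x : Sc x -> (x < 40)%N.
Proof.
rewrite /Sc; case: (ltnP x 40) => // Hx; by rewrite rep_big // addr0 (negbTE aC).
Qed.

Lemma okS_S : okS Sc.
Proof.
move=> i j ij Si Sj.
have Hi := @S40 i Si; have Hj := @S40 j Sj.
have [_ _ [e1 E1] [e2 E2]] := @rep_add i j Hi Hj ij.
have [n1 n2] := @rep_inj i j Hi Hj ij.
have H1 : a + rep i != a + rep j by apply: contra n1 => /eqP /addrI ->.
have Sj' : a + sg false (rep j) \in C by rewrite memC.
have H2 : a + rep i != a + sg false (rep j) by apply: contra n2 => /eqP /addrI ->.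
apply/andP; split.
  by move: (capN capC Si Sj H1); rewrite negsum E1 sgN memC.
by move: (capN capC Si Sj' H2); rewrite negsum /= E2 sgN memC.
Qed.

Definition g (q : 'I_40 * bool) : point := a + sg q.2 (rep q.1).

Lemma g_inj : injective g.
Proof. by move=> q q' /addrI E; apply: g0_inj. Qed.

Lemma g_mem q : (g q \in C) = Sc q.1.
Proof. exact: memC. Qed.

Lemma g_surj {x} : x != a -> exists q, x = g q.
Proof.
move=> xa; have : x - a != 0 by rewrite subr_eq0.
case/rep_surj => i Hi [] E; [exists (Ordinal Hi, true)|exists (Ordinal Hi, false)];
  by rewrite /g /= -E addrC subrK.
Qed.

Definition AS := [set i : 'I_40 | Sc i].

Hypothesis maxC : forall D, cap D -> (#|D| <= #|C|)%N.

Lemma count10 : (10 <= count Sc I40)%N.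
Proof.
have h20 : (20 <= #|C|)%N by rewrite -D0card; apply: maxC; exact: D0cap.
have sub : C \subset g @: setX AS [set: bool].
  apply/subsetP => x xC; have xa : x != a by apply: contraNneq aC => <-.
  case: (g_surj xa) => [[i b] E]; rewrite E; apply: imset_f.
  by rewrite !inE andbT -(g_mem (i, b)) -E.
have := leq_trans h20 (leq_trans (subset_leq_card sub) (leq_imset_card _ _)).
rewrite cardsX cardsT card_bool /AS cardA.
by rewrite -[20%N]/(10 * 2)%N leq_mul2r.
Qed.

Lemma PSS : PS Sc.
Proof. exact: search (@S40) okS_S count10. Qed.

Definition hh (i : 'I_40) : {set point} := [set g (i, true); g (i, false)].

Lemma hh_inj : injective hh.
Proof.
move=> i j E; have : g (i, true) \in hh j by rewrite -E !inE eqxx.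
rewrite !inE => /orP [] /eqP /g_inj; by case.
Qed.

Lemma alines_eq : alines_in a C = hh @: AS.
Proof.
apply/setP => L; apply/idP/imsetP.
  rewrite inE => /andP [/existsP [b /existsP [c /andP [/eqP LE Hl]]] LC].
  case/and4P: Hl => ab _ _ /eqP E.
  have ba : b != a by rewrite eq_sym.
  case: (g_surj ba) => [[i e] Eb].
  have bC : b \in C by apply: (subsetP LC); rewrite LE !inE eqxx.
  exists i; first by rewrite inE -(g_mem (i, e)) -Eb.
  have Ec : c = g (i, ~~ e).
    by have := solve3 E; rewrite Eb /g /= addrA opprD neg2 sgN => ->.
  rewrite LE /hh Eb Ec; case: e {Eb Ec} => //=; exact: setUC.
move=> [i iS ->]; rewrite inE; apply/andP; split.
  apply/existsP; exists (g (i, true)); apply/existsP; exists (g (i, false)).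
  rewrite eqxx /= /is_line /g /=.
  have Hi := ltn_ord i.
  apply/and4P; split.
  - by apply: contra (@rep_neq0 i Hi) => /eqP /esym /addrI0 ->.
  - by apply: contra (@rep_neqN i Hi) => /eqP /addrI /eqP.
  - by apply: contra (sg_neq0 false Hi) => /eqP /esym /addrI0 /eqP.
  - by rewrite [a + (a + _)]addrA addrACA subrr addr0 three.
apply/subsetP => x; rewrite !inE => /orP [] /eqP ->; rewrite g_mem; by move: iS; rewrite inE.
Qed.

Lemma alines10 : #|alines_in a C| = 10%N.
Proof.
rewrite alines_eq card_imset; last exact: hh_inj.
by rewrite /AS cardA; case: PSS.
Qed.

Section CP.
Variable p : point.
Hypothesis pC : p \notin C.
Hypothesis pa : p != a.

Definition X := [set x in C | - (p + x) \in C].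
Definition hp x := [set x; - (p + x)].

Lemma pline {x} : x \in C -> is_line p x (- (p + x)).
Proof. move=> xC; apply: line3; by apply: contraNneq pC => ->. Qed.

Lemma cpE : completed_pairs p C = hp @: X.
Proof.
apply/setP => P; rewrite inE; apply/existsP/imsetP.
  case=> x /andP [xC /existsP [y /andP [yC /and3P [xy /eqP PE Hl]]]].
  case/and4P: Hl => _ _ _ /eqP E; have Ey := solve3 E.
  exists x; first by rewrite inE xC -Ey.
  by rewrite PE /hp Ey.
case=> x; rewrite inE => /andP [xC yC] ->.
exists x; rewrite xC /=; apply/existsP; exists (- (p + x)); rewrite yC /= eqxx pline //.
by rewrite !andbT; have := pline xC => /and4P [_ ->].
Qed.

Lemma nn x : - (p + - (p + x)) = x.
Proof. by rewrite opprD opprK addKr. Qed.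

Lemma hpz {x z} : z \in hp x -> hp z = hp x.
Proof.
rewrite !inE => /orP [/eqP -> //|/eqP ->].
by rewrite /hp nn setUC.
Qed.

Lemma cardX2 : #|X| = (#|completed_pairs p C| * 2)%N.
Proof.
rewrite cpE.
have part : partition (hp @: X) X.
  apply/and3P; split.
  - rewrite cover_imset; apply/eqP/setP => z; apply/bigcupP/idP.
      case=> x; rewrite !inE => /andP [xC yC] /orP [/eqP ->|/eqP ->]; first by rewrite xC.
      by rewrite yC nn.
    by move=> zX; exists z => //; rewrite !inE eqxx.
  - apply/trivIsetP => A B /imsetP [x _ ->] /imsetP [y _ ->] ne.
    apply/pred0P => z /=; apply/negbTE/negP => /andP [zx zy].
    by move: ne; rewrite -(hpz zx) -(hpz zy) eqxx.
  - apply/imsetP => -[x _ E]; have : x \in hp x by rewrite !inE eqxx.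
    by rewrite -E inE.
rewrite (card_partition part) -sum_nat_const; apply: eq_bigr => A /imsetP [x xX ->].
rewrite cards2; move: xX; rewrite inE => /andP [xC _].
by have := pline xC => /and4P [_ -> _ _].
Qed.

Lemma cardX6 : #|X| = 6%N.
Proof.
have [[r s] Ep] := g_surj pa.
have Sr : ~~ Sc r by rewrite -(g_mem (r, s)) -Ep.
pose Y := [set q | g q \in X].
have XE : X = g @: Y.
  apply/setP => x; apply/idP/imsetP => [xX|[q qY ->]]; last by rewrite inE in qY.
  have xa : x != a.
    by move: xX; rewrite inE => /andP [xC _]; apply: contraNneq aC => <-.
  by case: (g_surj xa) => q E; exists q => //; rewrite inE -E.
rewrite XE card_imset; last exact: g_inj.
have termE : forall (i : 'I_40) (b : bool),
    ((i, b) \in Y) = Sc i && Sc (if s == b then o1 r i else o2 r i).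
  move=> i b; rewrite !inE g_mem /=.
  case Si: (Sc i) => //=.
  have ri : val r != val i by apply: contraNneq Sr => E; rewrite (val_inj E) Si.
  have [e Ee] := comb s b (ltn_ord r) (ltn_ord i) ri.
  by rewrite Ep /g /= negsum Ee sgN memC.
transitivity (\sum_(i : 'I_40) \sum_(b : bool) (((i, b) \in Y) : nat))%N.
  rewrite pair_bigA -sum1_card big_mkcond /=; apply: eq_bigr => -[i b] _ /=.
  by case: ((i, b) \in Y).
transitivity (\sum_(i : 'I_40) (Sc i * (Sc (o1 r i) + Sc (o2 r i))))%N.
  apply: eq_bigr => i _; rewrite big_bool /= !termE.
  by move: (termE) => _; case: (Sc i); case: (s) ; rewrite /= ?mul1n ?mul0n ?addn0 // addnC.
case: PSS => _ /(_ r (ltn_ord r) Sr) H6; apply: (etrans _ H6).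
rewrite big_mkcond /I40 -(big_mkord xpredT (fun c => (Sc c * (Sc (o1 r c) + Sc (o2 r c)))%N)).
rewrite /index_iota subn0 [RHS]big_mkcond; apply: eq_bigr => c _; by case: (Sc c); rewrite ?mul1n ?mul0n.
Qed.

Lemma cp3 : #|completed_pairs p C| = 3%N.
Proof.
have := cardX2; rewrite cardX6 -[6%N]/(3 * 2)%N => /eqP; rewrite eqn_mul2r /= => /eqP.
by [].
Qed.
End CP.
End Main.

Local Close Scope ring_scope.

Theorem proposition3p1 (C : {set point}) (a : point) :
  maximal_cap C -> anchor a C ->
  (#|alines_in a C| = 10 /\ C = \bigcup_(L in alines_in a C) L) /\
  (forall p : point, p \notin C -> p != a -> #|completed_pairs p C| = 3).
Proof.
move=> [capC maxC] [aC Cun]; split; first split => //.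
  exact: (@alines10 C a capC aC Cun maxC).
move=> p pC pa; exact: (@cp3 C a capC aC Cun maxC p pC pa).
Qed.
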